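(* Let $F$ be an infinite family of index sets linearly ordered by $\subseteq$ such that $I_1\subsetneq I_2$ in $F$ implies $I_2\setminus I_1$ is infinite. If $\langle F;\subseteq\rangle$ is densely ordered, then $|\overline{F}|\ge 2^{\omega}$.
   Context: A predicate symbol $R$ is non-empty for a theory $T$ if $T\vdash\exists\bar x R(\bar x)$, empty otherwise. A complete theory $T$ in a predicate language is language uniform (LU) if for each arity $m$, every permutation of the set of $m$-ary symbols non-empty for $T$ preserves $T$. Let $T_0$ be a complete LU-theory in a relational language $\Sigma_0$, let $n\ge1$, and let $\{R_k\mid k\in I_0\}$, $I_0$ infinite, be the set of $n$-ary symbols of $\Sigma_0$ that are non-empty for $T_0$. An index set is an infinite $I\subseteq I_0$ with $|I|=|I_0|$ and $|I_0\setminus I|$ equal to the number of $n$-ary symbols of $\Sigma_0$ that are empty for $T_0$. For infinite $F'\subseteq F$: $\bigcup F'$ is an (upper) accumulation point of $F'$ if $\bigcup F'\notin F'$, and $\bigcap F'$ is a (lower) accumulation point of $F'$ if $\bigcap F'\notin F'$. The closure $\overline{F}$ is the set consisting of the elements of $F$ together with all accumulation points of infinite subfamilies $F'\subseteq F$, ordered by $\subseteq$. *)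

(* Defs.v *)
From HB Require Import structures.
From mathcomp Require Import all_boot.
From mathcomp Require Import boolp classical_sets functions cardinality.
Set Implicit Arguments. Unset Strict Implicit. Unset Printing Implicit Defensive.
Local Open Scope classical_set_scope.
Local Open Scope card_scope.

(* K : type of indices of the n-ary symbols of Sigma_0 non-empty for T_0,
   i.e. I_0 = [set: K]; E : type of the n-ary symbols empty for T_0. *)

Definition index_set (K E : Type) (I : set K) : Prop :=
  infinite_set I /\ I #= [set: K] /\ (~` I) #= [set: E].

Definition subset_chain (K : Type) (F : set (set K)) : Prop :=
  forall A B, F A -> F B -> A `<=` B \/ B `<=` A.

Definition dense_family (K : Type) (F : set (set K)) : Prop :=
  forall A B, F A -> F B -> A `<` B -> exists2 C, F C & A `<` C /\ C `<` B.

Definition accumulation_point (K : Type) (F' : set (set K)) (X : set K) : Prop :=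
  (X = \bigcup_(A in F') A /\ ~ F' X) \/ (X = \bigcap_(A in F') A /\ ~ F' X).

Definition closure_fam (K : Type) (F : set (set K)) : set (set K) :=
  [set X | F X \/ exists F' : set (set K),
     [/\ F' `<=` F, infinite_set F' & accumulation_point F' X]].

(* Main.v *)
Require Import Defs.
From mathcomp Require Import all_boot.
From mathcomp Require Import boolp classical_sets functions cardinality.
Local Open Scope classical_set_scope.
Local Open Scope card_scope.

Lemma inj_le_help {T U} (f : T -> U) (B : set U) :
  injective f -> (forall x, B (f x)) -> [set: T] #<= B.
Proof.
move=> finj fB.
have := @inj_card_eq T U setT f (in2W finj).
rewrite card_eq_sym card_eq_le => /andP[h _].
apply: card_le_trans h _; apply: subset_card_le.
by move=> _ [x _ <-]; exact: fB.
Qed.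

Definition stepK {K} (g : set K * set K -> set K * set K * set K) (b : bool)
  (p : set K * set K) : set K * set K :=
  if b then ((g p).2, p.2) else ((g p).1.1, (g p).1.2).

Fixpoint pth {K} g (p0 : set K * set K) (x : nat -> bool) (n : nat) :=
  match n with 0 => p0 | n'.+1 => stepK g (x n') (pth g p0 x n') end.

Lemma proper_trans' {T} {A B C : set T} : A `<` B -> B `<` C -> A `<` C.
Proof.
move=> [AB nBA] [BC nCB]; split; first by move=> z /AB /BC.
by move=> CA; apply: nCB => z /CA /AB.
Qed.

Theorem proposition4p9 (K E : Type) (F : set (set K)) :
  infinite_set [set: K] ->
  (forall I, F I -> index_set E I) ->
  infinite_set F ->
  subset_chain F ->
  (forall I1 I2, F I1 -> F I2 -> I1 `<` I2 -> infinite_set (I2 `\` I1)) ->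
  dense_family F ->
  [set: set nat] #<= closure_fam F.
Proof.
move=> _ _ Finf Fch _ Fd.
pose Inv (p : set K * set K) := [/\ F p.1, F p.2 & p.1 `<` p.2].
have gex : forall p, exists q : set K * set K * set K,
    Inv p -> [/\ F q.1.1, F q.1.2, F q.2 &
      [/\ p.1 `<` q.1.1, q.1.1 `<` q.1.2, q.1.2 `<` q.2 & q.2 `<` p.2]].
  move=> p; have [[Fa Fb ab]|nI] := EM (Inv p); last first.
    by exists (set0, set0, set0).
  have [c Fc [ac cb]] := Fd _ _ Fa Fb ab.
  have [d Fd' [cd db]] := Fd _ _ Fc Fb cb.
  have [e Fe [de eb]] := Fd _ _ Fd' Fb db.
  by exists (c, d, e).
have [g hg] := choice gex.
have [p0 Ip0] : exists p0, Inv p0.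
  apply: contrapT => np; apply: Finf.
  have [[A FA]|F0] := EM (exists A, F A); last first.
    suff -> : F = set0 by exact: finite_set0.
    by apply/seteqP; split=> // z Fz; apply: F0; exists z.
  suff -> : F = [set A] by exact: finite_set1.
  apply/seteqP; split=> [B FB|_ ->//].
  apply: contrapT => nBA.
  have [AB|BA] := Fch _ _ FA FB.
    by apply: np; exists (A, B); split=> //; split=> // BA; apply: nBA; apply/seteqP.
  by apply: np; exists (B, A); split=> //; split=> // AB; apply: nBA; apply/seteqP.
have Istep : forall b p, Inv p ->
    [/\ Inv (stepK g b p), p.1 `<` (stepK g b p).1 & (stepK g b p).2 `<=` p.2].
  move=> b p Ip; have [F1 F2 F3 [h1 h2 h3 h4]] := hg p Ip.
  case: b; rewrite /stepK /=.
    split=> //; first by split=> //; case: Ip.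
    exact: (proper_trans' h1 (proper_trans' h2 h3)).
  split=> //; last by move=> z /(proj1 h3) /(proj1 h4).
pose P x n := pth g p0 x n.
have Ipth : forall x n, Inv (P x n).
  by move=> x; elim=> [|n IH] //=; case: (Istep (x n) _ IH).
have amono : forall x m n, m <= n -> (P x m).1 `<=` (P x n).1.
  move=> x m; elim=> [|n IH]; first by rewrite leqn0 => /eqP ->.
  rewrite leq_eqVlt => /orP[/eqP -> //|]; rewrite ltnS => /IH h z /h.
  by case: (Istep (x n) _ (Ipth x n)) => _ [+ _] _; apply.
have bmono : forall x m n, m <= n -> (P x n).2 `<=` (P x m).2.
  move=> x m; elim=> [|n IH]; first by rewrite leqn0 => /eqP ->.
  rewrite leq_eqVlt => /orP[/eqP -> //|]; rewrite ltnS => /IH h z hz; apply: h.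
  by case: (Istep (x n) _ (Ipth x n)) => _ _; apply.
have ab : forall x m n, (P x n).1 `<=` (P x m).2.
  move=> x m n z hz.
  apply: (bmono x m (maxn m n) (leq_maxl _ _)).
  case: (Ipth x (maxn m n)) => _ _ [+ _]; apply.
  exact: (amono x n (maxn m n) (leq_maxr _ _)).
pose U x := \bigcup_(A in range (fun n => (P x n).1)) A.
have agree : forall x y n, (forall k, k < n -> x k = y k) -> P x n = P y n.
  move=> x y; elim=> [//|n IH] h /=.
  rewrite /P /= -/(P x n) -/(P y n) IH ?h // => k kn.
  by apply: h; apply: ltn_trans kn _.
have diff : forall x y n, (forall k, k < n -> x k = y k) -> x n = false ->
    y n = true -> U x <> U y.
  move=> x y n h xn yn Uxy.
  have eP := agree x y n h.
  have [F1 F2 F3 [h1 h2 h3 h4]] := hg (P x n) (Ipth x n).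
  have sx : U x `<=` (g (P x n)).1.2.
    move=> z [_ [m _ <-]] hz.
    have := ab x n.+1 m z hz; by rewrite /P /= -/(P x n) xn.
  have sy : (g (P x n)).2 `<=` U y.
    move=> z hz; exists (P y n.+1).1; first by exists n.+1.
    by rewrite /P /= -/(P y n) yn -eP.
  by apply: (proj2 h3) => z /sy; rewrite -Uxy => /sx.
have Uinj : forall x y, U x = U y -> forall n, x n = y n.
  move=> x y Uxy.
  suff H : forall n, forall k, k < n -> x k = y k by move=> n; apply: (H n.+1).
  elim=> [//|n IH] k; rewrite ltnS leq_eqVlt => /orP[/eqP ->|]; last exact: IH.
  case Exn: (x n); case Eyn: (y n) => //.
    by exfalso; apply: (diff y x n) => // k' /IH.
  by exfalso; apply: (diff x y n).
pose X (S : set nat) := U (fun n => `[< S n >]).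
apply: (@inj_le_help _ _ X).
  move=> S T XST; apply/funext => n; apply/propext.
  have /= e := Uinj _ _ XST n.
  split=> h.
    have : `[< T n >] by rewrite -e; apply/asboolP.
    by move/asboolP.
  have : `[< S n >] by rewrite e; apply/asboolP.
  by move/asboolP.
move=> S; rewrite /closure_fam /=.
set x := (fun n => `[< S n >]).
have [FX|nFX] := EM (range (fun n => (P x n).1) (X S)).
  left; case: FX => n _ <-; by case: (Ipth x n).
right; exists (range (fun n => (P x n).1)); split.
- by move=> _ [n _ <-]; case: (Ipth x n).
- apply/infiniteP; apply: (@inj_le_help _ _ (fun n => (P x n).1)); last by move=> n; exists n.
  move=> m n e; apply/eqP; rewrite eqn_leq; apply/andP; split; rewrite leqNgt;
    apply/negP => lt.
  + have := amono x n.+1 m lt.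
    case: (Istep (x n) _ (Ipth x n)) => _ [_ +] _; rewrite -/(P x n) /= => nn hh.
    by apply: nn => z /hh; rewrite -e.
  + have := amono x m.+1 n lt.
    case: (Istep (x m) _ (Ipth x m)) => _ [_ +] _; rewrite -/(P x m) /= => nn hh.
    by apply: nn => z /hh; rewrite e.
- by left.
Qed.
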